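(* Let $u,v$ be two words, and $a$ be a letter. Then, \begin{equation} uav = \sum_{u_1u_2=u}(-1)^{|u_2|}u_1 \sqcup\!\sqcup (a(\overline{u_2} \sqcup\!\sqcup v)). \end{equation}
   Context: Words are over a totally ordered alphabet (e.g. the positive integers), and identities are taken in the free $\mathbb{Z}$-module spanned by words. Here $\sqcup\!\sqcup$ denotes the (ordinary) shuffle product of words, extended bilinearly; juxtaposition denotes concatenation (so $a(w)$ means the letter $a$ concatenated in front of each word of $w$); the sum runs over all factorizations $u=u_1u_2$ of $u$ as a concatenation of two (possibly empty) words; $|u_2|$ is the length of $u_2$; and $\overline{u_2}$ denotes the reversal (mirror image) of the word $u_2$. For example, $1234 = 12\sqcup\!\sqcup 34 - 1\sqcup\!\sqcup 3(2\sqcup\!\sqcup 4)+3(21\sqcup\!\sqcup 4)$. *)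

(* Defs.v *)
From mathcomp Require Import all_boot all_order all_algebra.
Set Implicit Arguments. Unset Strict Implicit. Unset Printing Implicit Defensive.
Import GRing.Theory.
Local Open Scope ring_scope.

(* Words over the totally ordered alphabet nat (positive integers embed). *)
Definition word := seq nat.

(* Elements of the free Z-module on words, represented as finite formal sums
   (lists of (coefficient, word) pairs); two such represent the same element
   iff they have the same coefficient on every word (see [coef]). *)
Definition lc := seq (int * word).

Definition coef (x : lc) (w : word) : int :=
  \sum_(p <- x | p.2 == w) p.1.

Fixpoint shuffle (u v : word) {struct u} : seq word :=
  match u with
  | [::] => [:: v]
  | a :: u' =>
      let fix sh_aux (v : word) : seq word :=
        match v with
        | [::] => [:: u]
        | b :: v' => map (cons a) (shuffle u' v) ++ map (cons b) (sh_aux v')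
        end
      in sh_aux v
  end.

Definition lc_shuffle (x y : lc) : lc :=
  flatten [seq [seq (p.1 * q.1, w) | w <- shuffle p.2 q.2] | p <- x, q <- y].

Definition lc_word (w : word) : lc := [:: (1, w)].

Definition lc_prepend (a : nat) (x : lc) : lc := [seq (p.1, a :: p.2) | p <- x].

Definition lc_scale (c : int) (x : lc) : lc := [seq (c * p.1, p.2) | p <- x].

(* RHS: sum over factorizations u = u1 u2 (u1 = take i u, u2 = drop i u,
   i = 0..|u|) of (-1)^|u2| u1 ⧢ (a (rev u2 ⧢ v)). *)
Definition rhs7 (u v : word) (a : nat) : lc :=
  flatten [seq lc_scale ((-1) ^+ size (drop i u))
             (lc_shuffle (lc_word (take i u))
                (lc_prepend a (lc_shuffle (lc_word (rev (drop i u))) (lc_word v))))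
          | i <- iota 0 (size u).+1].

(* Main.v *)
Require Import Defs.
From mathcomp Require Import all_boot all_order all_algebra.
Import GRing.Theory.
Local Open Scope ring_scope.

Lemma shuffle_nil_l y : shuffle [::] y = [:: y]. Proof. by []. Qed.
Lemma shuffle_nil_r x : shuffle x [::] = [:: x]. Proof. by case: x. Qed.
Lemma shuffle_cons c x d y : shuffle (c::x) (d::y) =
  map (cons c) (shuffle x (d::y)) ++ map (cons d) (shuffle (c::x) y).
Proof. by []. Qed.

Definition F (x y w : word) : int := (count_mem w (shuffle x y))%:Z.

Lemma count_cons_map (c e : nat) w (L : seq word) :
  count_mem (e :: w) (map (cons c) L) = if c == e then count_mem w L else 0%N.
Proof.
rewrite count_map; case: eqP => [->|ne].
  by apply: eq_count => t /=; rewrite eqseq_cons eqxx.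
rewrite -(count_pred0 L); apply: eq_count => t /=; rewrite eqseq_cons.
by case: eqP.
Qed.

Lemma count_nil_map (c : nat) (L : seq word) :
  count_mem [::] (map (cons c) L) = 0%N.
Proof. by rewrite count_map -(count_pred0 L); apply: eq_count. Qed.

Lemma F_nil x y : F x y [::] = if (x == [::]) && (y == [::]) then 1 else 0.
Proof.
case: x => [|c x]; case: y => [|d y] //.
by rewrite /F shuffle_cons count_cat !count_nil_map.
Qed.

Lemma F_cons x y e w : F x y (e :: w) =
  (if ohead x == Some e then F (behead x) y w else 0) +
  (if ohead y == Some e then F x (behead y) w else 0).
Proof.
case: x => [|c x]; case: y => [|d y] /=.
- by rewrite /F /= add0r. 
- rewrite /F /= add0r eqseq_cons.
  by have -> : (Some d == Some e) = (d == e) by []; case: (d == e).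
- rewrite /F /= addr0 eqseq_cons shuffle_nil_r /=.
  by have -> : (Some c == Some e) = (c == e) by []; case: (c == e).
- rewrite /F shuffle_cons count_cat !count_cons_map PoszD.
  have -> : (Some d == Some e) = (d == e) by [].
  have -> : (Some c == Some e) = (c == e) by [].
  by congr (_ + _); case: (c == e); case: (d == e).
Qed.

Lemma sum_if (b : bool) (L : seq word) (g : word -> int) :
  \sum_(t <- L) (if b then g t else 0) = if b then \sum_(t <- L) g t else 0.
Proof. by case: b => //; rewrite big1. Qed.

Lemma eqSome (c e : nat) : (Some c == Some e) = (c == e).
Proof. by []. Qed.

Lemma sum_shuffle_head e r v (g : word -> int) :
  \sum_(t <- shuffle r v) (if ohead t == Some e then g (behead t) else 0) =
  (if ohead r == Some e then \sum_(t <- shuffle (behead r) v) g t else 0) +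
  (if ohead v == Some e then \sum_(t <- shuffle r (behead v)) g t else 0).
Proof.
case: r => [|c r]; case: v => [|d v].
- by rewrite shuffle_nil_l big_seq1 /= addr0.
- by rewrite shuffle_nil_l big_seq1 /= add0r big_seq1.
- by rewrite shuffle_nil_r big_seq1 /= addr0 shuffle_nil_r big_seq1.
- rewrite shuffle_cons big_cat !big_map /=.
  by rewrite !sum_if.
Qed.

Lemma sum_count (L : seq word) w :
  \sum_(t <- L) (if t == w then 1 else 0) = (count_mem w L)%:Z.
Proof.
elim: L => [|t L IH]; rewrite ?big_nil ?big_cons //= IH PoszD.
by case: (t == w).
Qed.

Definition B (x r v w : word) : int := \sum_(t <- shuffle r v) F x t w.

Lemma B_nil x r v : B x r v [::] =
  if [&& x == [::], r == [::] & v == [::]] then 1 else 0.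
Proof.
rewrite /B; under eq_bigr do rewrite F_nil.
case: (x == [::]) => /=; last by rewrite big1.
by rewrite sum_count -/(F r v [::]) F_nil.
Qed.

Lemma B_cons x r v e w : B x r v (e :: w) =
  (if ohead x == Some e then B (behead x) r v w else 0) +
  (if ohead r == Some e then B x (behead r) v w else 0) +
  (if ohead v == Some e then B x r (behead v) w else 0).
Proof.
rewrite /B; under eq_bigr do rewrite F_cons.
by rewrite big_split /= sum_if (sum_shuffle_head e r v (fun t => F x t w)) addrA.
Qed.

Definition A (u v w : word) : int :=
  \sum_(i < (size u).+1) (-1) ^+ (size u - i)%N * B (take i u) (rev (drop i u)) v w.

Lemma P1 u b u' v e w : u = b :: u' ->
  \sum_(i < (size u).+1) (-1) ^+ (size u - i)%N *
     (if ohead (take i u) == Some e then B (behead (take i u)) (rev (drop i u)) v w else 0)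
  = if b == e then A u' v w else 0.
Proof.
move=> ->; rewrite big_ord_recl /= mulr0 add0r eqSome.
case: (b == e); last by rewrite big1 // => i _; rewrite mulr0.
by apply: eq_bigr => i _.
Qed.

Lemma P2 u y d v e w : u = rcons y d ->
  \sum_(i < (size u).+1) (-1) ^+ (size u - i)%N *
     (if ohead (rev (drop i u)) == Some e then B (take i u) (behead (rev (drop i u))) v w else 0)
  = - (if d == e then A y v w else 0).
Proof.
move=> ->; rewrite size_rcons big_ord_recr /= drop_oversize ?size_rcons //= mulr0 addr0.
have E (i : 'I_(size y).+1) : drop i (rcons y d) = rcons (drop i y) d.
  by rewrite drop_rcons // -ltnS.
have T (i : 'I_(size y).+1) : take i (rcons y d) = take i y.
  by rewrite -cats1 takel_cat // -ltnS.
case de: (d == e) => /=; last first.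
  rewrite big1 ?oppr0 // => i _.
  by rewrite E rev_rcons /= eqSome de mulr0.
rewrite /A -sumrN; apply: eq_bigr => i _.
rewrite E T rev_rcons /= eqSome de.
have le : (i <= size y)%N by rewrite -ltnS.
by rewrite (subSn le) exprS mulN1r mulNr.
Qed.

Lemma A_zero w : forall u v, u != [::] -> A u v w = 0.
Proof.
elim: w => [|e w IH] u v nu.
  rewrite /A big1 // => i _; rewrite B_nil.
  case: and3P => [[/eqP t /eqP r _]|_]; last by rewrite mulr0.
  have : rev (rev (drop i u)) = [::] by rewrite r.
  rewrite revK => dr.
  have : take i u ++ drop i u = [::] by rewrite t dr.
  by rewrite cat_take_drop => u0; rewrite u0 in nu.
rewrite /A; under eq_bigr do rewrite B_cons !mulrDr.
rewrite !big_split /=.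
case: u nu => [//|b u'] _.
rewrite (P1 _ _ _ v e w (erefl (b :: u'))) (P2 _ _ _ v e w (lastI b u')).
have -> : \sum_(i < (size (b :: u')).+1) (-1) ^+ (size (b :: u') - i)%N *
     (if ohead v == Some e then B (take i (b :: u')) (rev (drop i (b :: u'))) (behead v) w else 0) = 0.
  case: (ohead v == Some e); last by rewrite big1 // => i _; rewrite mulr0.
  exact: (IH (b :: u') (behead v)).
rewrite addr0.
case: u' => [|c u'] /=.
  by case: (b == e); rewrite ?subrr // oppr0 addr0.
rewrite !IH //.
by case: (b == e); case: (last c u' == e); rewrite ?subrr ?oppr0 ?addr0.
Qed.

Definition M (a : nat) (u v w : word) : int :=
  \sum_(i < (size u).+1) (-1) ^+ (size u - i)%N *
    \sum_(t <- shuffle (rev (drop i u)) v) F (take i u) (a :: t) w.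

Lemma M_nilw a u v : M a u v [::] = 0.
Proof.
rewrite /M big1 // => i _; rewrite big1 ?mulr0 // => t _.
by rewrite F_nil andbF.
Qed.

Lemma M_nilu a v w : M a [::] v w = if w == a :: v then 1 else 0.
Proof.
rewrite /M big_ord_recr big_ord0 /= add0r mul1r big_seq1.
by rewrite /F /= addn0 eq_sym; case: (_ == _).
Qed.

Lemma M_cons a b u v e w : M a (b :: u) v (e :: w) =
  (if b == e then M a u v w else 0) + (if a == e then A (b :: u) v w else 0).
Proof.
rewrite /M; under eq_bigr do under eq_bigr do rewrite F_cons /=.
under eq_bigr do rewrite big_split /= !sum_if mulrDr.
rewrite big_split /=; congr (_ + _).
  rewrite big_ord_recl /= mulr0 add0r eqSome.
  case: (b == e); last by rewrite big1 // => i _; rewrite mulr0.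
  by apply: eq_bigr => i _.
rewrite eqSome; case: (a == e); last by rewrite big1 // => i _; rewrite mulr0.
by [].
Qed.

Lemma M_main a v : forall u w, M a u v w = if w == u ++ a :: v then 1 else 0.
Proof.
elim=> [|b u IH] [|e w] //.
- by rewrite M_nilw.
- by rewrite M_nilu.
- by rewrite M_nilw.
rewrite M_cons A_zero // if_same addr0 IH /= eqseq_cons.
by rewrite [e == b]eq_sym; case: (b == e).
Qed.

Lemma coef_cat x y w : coef (x ++ y) w = coef x w + coef y w.
Proof. by rewrite /coef big_cat. Qed.

Lemma coef_flatten (L : seq lc) w : coef (flatten L) w = \sum_(x <- L) coef x w.
Proof.
elim: L => [|x L IH]; first by rewrite big_nil /coef big_nil.
by rewrite /= coef_cat IH big_cons.
Qed.

Lemma coef_scale c x w : coef (lc_scale c x) w = c * coef x w.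
Proof. by rewrite /coef /lc_scale big_map mulr_sumr. Qed.

Lemma lc_shuffle_words x y :
  lc_shuffle (lc_word x) (lc_word y) = [seq (1, t) | t <- shuffle x y].
Proof.
rewrite /lc_shuffle /= cats0; apply: eq_map => t.
by rewrite mulr1.
Qed.

Lemma coef_shuffle_word x (y : lc) w :
  coef (lc_shuffle (lc_word x) y) w = \sum_(q <- y) q.1 * F x q.2 w.
Proof.
rewrite /lc_shuffle /= cats0 coef_flatten big_map; apply: eq_bigr => q _.
rewrite /coef big_map /= mul1r /F -sum_count.
rewrite mulr_sumr big_mkcond /=; apply: eq_bigr => t _.
by case: (t == w); rewrite ?mulr1 ?mulr0.
Qed.

Theorem mainTheorem7 (u v : word) (a : nat) :
  forall w : word, coef (lc_word (u ++ a :: v)) w = coef (rhs7 u v a) w.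
Proof.
move=> w.
have -> : coef (lc_word (u ++ a :: v)) w = if w == u ++ a :: v then 1 else 0.
  by rewrite /coef /lc_word big_mkcond big_seq1 /= eq_sym; case: (_ == _).
rewrite -M_main /rhs7 coef_flatten big_map.
have -> : iota 0 (size u).+1 = index_iota 0 (size u).+1 by rewrite /index_iota subn0.
rewrite big_mkord /M; apply: eq_bigr => i _.
rewrite coef_scale size_drop coef_shuffle_word /lc_prepend big_map lc_shuffle_words big_map.
by congr (_ * _); apply: eq_bigr => t _; rewrite mul1r.
Qed.
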